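(* Let $X$ be a set and $\tau$ a Hausdorff topology on $I(X)$ making it a topological inverse semigroup. For $A\subseteq X$ let $R_A=\{f\circ 1_A: f\in I(X)\}$ with the subspace topology of $\tau$ and $r_A:I(X)\to R_A$, $r_A(f)=f\circ 1_A$. Suppose $r_A$ is an open map for every cofinite $A\subseteq X$. Let $(f_k)_{k\in\mathbb N}$ be a sequence in $I(X)$ and $f\in I(X)$ such that (i) $f_k\to f$ in $\tau_{pp}$, and (ii) there is a cofinite $A\subseteq X$ with $f_k\circ 1_A\to f\circ 1_A$ in $\tau$. Then $f_k\to f$ in $\tau$.
   Context: $I(X)$ is the set of all bijections $f:B\to C$ with $B,C\subseteq X$ (including the empty map), $\mathrm{dom}(f)=B$, $\mathrm{im}(f)=C$, with composition $\mathrm{dom}(f\circ g)=g^{-1}(\mathrm{dom}(f)\cap\mathrm{im}(g))$ and inversion $f\mapsto f^{-1}$. $1_A$ is the identity map on $A$. For $x,y\in X$: $v(x,y)=\{f: x\in\mathrm{dom}(f), f(x)=y\}$, $w_1(x)=\{f: x\notin\mathrm{dom}(f)\}$, $w_2(y)=\{f: y\notin\mathrm{im}(f)\}$; $\tau_{pp}$ is the topology generated by all these sets. A topological inverse semigroup has continuous multiplication and inversion. *)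

(* Defs.v *)
From Stdlib Require Import Classical ClassicalEpsilon List Arith.
Set Implicit Arguments.

(* A partial bijection f : B -> C with B, C subsets of X, encoded as a partial
   function X -> option X that is injective on its domain:
   dom f = {x | f x <> None}, im f = {y | exists x, f x = Some y}. *)
Record pinj (X : Type) := PInj {
  pf :> X -> option X;
  pf_inj : forall x y z, pf x = Some z -> pf y = Some z -> x = y }.

Definition comp_fun (X : Type) (f g : X -> option X) (x : X) : option X :=
  match g x with Some y => f y | None => None end.

Lemma comp_inj (X : Type) (f g : pinj X) :
  forall x y z, comp_fun f g x = Some z -> comp_fun f g y = Some z -> x = y.
Proof.
  unfold comp_fun; intros x y z Hx Hy.
  destruct (g x) as [a|] eqn:Ga; [|discriminate].
  destruct (g y) as [b|] eqn:Gb; [|discriminate].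
  assert (a = b) by (apply (pf_inj f) with z; assumption). subst b.
  apply (pf_inj g) with a; assumption.
Qed.

Definition comp (X : Type) (f g : pinj X) : pinj X := @PInj X (comp_fun f g) (@comp_inj X f g).

Definition inv_fun (X : Type) (f : pinj X) (y : X) : option X :=
  match excluded_middle_informative (exists x, f x = Some y) with
  | left H => Some (proj1_sig (constructive_indefinite_description _ H))
  | right _ => None
  end.

Lemma inv_inj (X : Type) (f : pinj X) :
  forall x y z, inv_fun f x = Some z -> inv_fun f y = Some z -> x = y.
Proof.
  unfold inv_fun; intros x y z.
  destruct (excluded_middle_informative (exists a, f a = Some x)) as [Hx|];
    [|discriminate].
  destruct (excluded_middle_informative (exists a, f a = Some y)) as [Hy|];
    [|discriminate].
  destruct (constructive_indefinite_description _ Hx) as [a Ha].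
  destruct (constructive_indefinite_description _ Hy) as [b Hb].
  simpl; intros E1 E2. inversion E1; inversion E2; subst.
  rewrite Ha in Hb; inversion Hb; reflexivity.
Qed.

Definition inv (X : Type) (f : pinj X) : pinj X := @PInj X (inv_fun f) (@inv_inj X f).

Definition id_fun (X : Type) (A : X -> Prop) (x : X) : option X :=
  if excluded_middle_informative (A x) then Some x else None.

Lemma id_inj (X : Type) (A : X -> Prop) :
  forall x y z, id_fun A x = Some z -> id_fun A y = Some z -> x = y.
Proof.
  unfold id_fun; intros x y z.
  destruct (excluded_middle_informative (A x)); [|discriminate].
  destruct (excluded_middle_informative (A y)); [|discriminate].
  intros E1 E2; inversion E1; inversion E2; subst; reflexivity.
Qed.

Definition idA (X : Type) (A : X -> Prop) : pinj X := @PInj X (id_fun A) (@id_inj X A).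

Definition cofinite (X : Type) (A : X -> Prop) : Prop :=
  exists s : list X, forall x, ~ A x -> In x s.

Definition topology (T : Type) (O : (T -> Prop) -> Prop) : Prop :=
  O (fun _ => True) /\
  (forall U V, O U -> O V -> O (fun x => U x /\ V x)) /\
  (forall F : (T -> Prop) -> Prop, (forall U, F U -> O U) ->
     O (fun x => exists U, F U /\ U x)).

Definition hausdorff (T : Type) (O : (T -> Prop) -> Prop) : Prop :=
  forall x y, x <> y -> exists U V, O U /\ O V /\ U x /\ V y /\
    (forall z, U z -> V z -> False).

Definition generated (T : Type) (S : (T -> Prop) -> Prop) (W : T -> Prop) : Prop :=
  forall O, topology O -> (forall U, S U -> O U) -> O W.

Definition prod_open (T : Type) (O : (T -> Prop) -> Prop) (W : T * T -> Prop) : Prop :=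
  forall p, W p -> exists U V, O U /\ O V /\ U (fst p) /\ V (snd p) /\
    (forall a b, U a -> V b -> W (a, b)).

Definition continuous_mul (X : Type) (O : (pinj X -> Prop) -> Prop) : Prop :=
  forall W, O W -> prod_open O (fun p => W (comp (fst p) (snd p))).

Definition continuous_inv (X : Type) (O : (pinj X -> Prop) -> Prop) : Prop :=
  forall W, O W -> O (fun f => W (inv f)).

Definition topological_inverse_semigroup (X : Type)
  (O : (pinj X -> Prop) -> Prop) : Prop :=
  topology O /\ continuous_mul O /\ continuous_inv O.

Definition subspace_open (T : Type) (O : (T -> Prop) -> Prop) (R : T -> Prop)
  (W : T -> Prop) : Prop :=
  exists V, O V /\ forall x, W x <-> (V x /\ R x).

Definition R_ (X : Type) (A : X -> Prop) (g : pinj X) : Prop :=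
  exists f, g = comp f (idA A).

Definition rA_open (X : Type) (O : (pinj X -> Prop) -> Prop) (A : X -> Prop) : Prop :=
  forall U, O U -> subspace_open O (R_ A) (fun g => exists f, U f /\ g = comp f (idA A)).

Definition v_set (X : Type) (x y : X) (f : pinj X) : Prop := f x = Some y.
Definition w1_set (X : Type) (x : X) (f : pinj X) : Prop := f x = None.
Definition w2_set (X : Type) (y : X) (f : pinj X) : Prop := forall x, f x <> Some y.

Definition pp_subbasis (X : Type) (U : pinj X -> Prop) : Prop :=
  (exists x y, U = v_set x y) \/ (exists x, U = w1_set x) \/ (exists y, U = w2_set y).

Definition tau_pp (X : Type) : (pinj X -> Prop) -> Prop := generated (@pp_subbasis X).

Definition converges (T : Type) (O : (T -> Prop) -> Prop) (u : nat -> T) (l : T) : Prop :=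
  forall U, O U -> U l -> exists N, forall k, N <= k -> U (u k).

(* Main.v *)
Require Import Defs.
From Stdlib Require Import Classical ClassicalEpsilon FunctionalExtensionality ProofIrrelevance List Arith Lia.

Lemma pinj_ext (X : Type) (f g : pinj X) : (forall x, f x = g x) -> f = g.
Proof.
  destruct f as [p1 h1], g as [p2 h2]; simpl; intro H.
  assert (p1 = p2) by (apply functional_extensionality; exact H). subst p2.
  f_equal; apply proof_irrelevance.
Qed.

Lemma id_fun_true (X : Type) (A : X -> Prop) x : A x -> id_fun A x = Some x.
Proof. unfold id_fun; destruct (excluded_middle_informative (A x)); tauto. Qed.
Lemma id_fun_false (X : Type) (A : X -> Prop) x : ~ A x -> id_fun A x = None.
Proof. unfold id_fun; destruct (excluded_middle_informative (A x)); tauto. Qed.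

Lemma nbhd_v (X : Type) (tau : (pinj X -> Prop) -> Prop)
  (Htis : topological_inverse_semigroup tau) (Hhaus : hausdorff tau)
  (g : pinj X) x y : g x = Some y ->
  exists W, tau W /\ W g /\ forall a, W a -> a x = Some y.
Proof.
  intro Hg. destruct Htis as [Htop [Hmul Hinv]].
  set (zero := idA (fun _ : X => False)).
  set (e := comp (comp (idA (fun z => z = y)) g) (idA (fun z => z = x))).
  assert (He : e x = Some y).
  { unfold e; simpl; unfold comp_fun. rewrite id_fun_true by reflexivity.
    rewrite Hg. apply id_fun_true; reflexivity. }
  assert (Hne : e <> zero).
  { intro E. assert (e x = zero x) by (rewrite E; reflexivity).
    rewrite He in H. unfold zero in H; simpl in H. rewrite id_fun_false in H by tauto.
    discriminate. }
  destruct (Hhaus _ _ Hne) as [U0 [V0 [HU0 [HV0 [Ue [Vz Hdis]]]]]].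
  destruct (Hmul U0 HU0 (comp (idA (fun z => z = y)) g, idA (fun z => z = x)) Ue)
    as [U1 [V1 [HU1 [HV1 [U1a [V1b H1]]]]]]. simpl in *.
  destruct (Hmul U1 HU1 (idA (fun z => z = y), g) U1a)
    as [U2 [V2 [HU2 [HV2 [U2a [V2b H2]]]]]]. simpl in *.
  exists V2; split; [exact HV2|split; [exact V2b|]].
  intros a Ha. apply NNPP; intro Hn.
  pose proof (H1 _ _ (H2 _ _ U2a Ha) V1b) as HU.
  apply (Hdis _ HU).
  replace (comp (comp (idA (fun z : X => z = y)) a) (idA (fun z : X => z = x))) with zero;
    [exact Vz|].
  apply pinj_ext; intro z. unfold zero; simpl. rewrite id_fun_false by tauto.
  unfold comp_fun. destruct (classic (z = x)) as [->|Hz].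
  - rewrite id_fun_true by reflexivity. destruct (a x) as [w|] eqn:Eax; [|reflexivity].
    apply eq_sym, id_fun_false. intro; subst; tauto.
  - rewrite id_fun_false by tauto. reflexivity.
Qed.

Lemma nbhd_list (X : Type) (tau : (pinj X -> Prop) -> Prop)
  (Htis : topological_inverse_semigroup tau) (Hhaus : hausdorff tau)
  (f : pinj X) (s : list X) : forall V0, tau V0 -> V0 f ->
  exists W, tau W /\ W f /\ forall a, W a -> V0 a /\
     forall x, In x s -> forall y, f x = Some y -> a x = Some y.
Proof.
  induction s as [|b s IH]; intros V0 HV0 Vf.
  - exists V0; split; [auto|split; [auto|]]. intros a Ha; split; [auto|]. intros x [].
  - destruct (IH V0 HV0 Vf) as [W [HW [Wf HWa]]].
    destruct (f b) as [yb|] eqn:Fb.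
    + destruct (nbhd_v X tau Htis Hhaus f b yb Fb) as [Wb [HWb [Wbf HWba]]].
      exists (fun a => W a /\ Wb a). destruct Htis as [[_ [Hint _]] _].
      split; [apply Hint; auto|split; [auto|]].
      intros a [Wa Wba]. destruct (HWa a Wa) as [V0a Hs]. split; auto.
      intros x [<-|Hx] y Fy; [rewrite Fb in Fy; inversion Fy; subst; auto|auto].
    + exists W; split; auto; split; auto. intros a Wa.
      destruct (HWa a Wa) as [V0a Hs]. split; auto.
      intros x [<-|Hx] y Fy; [rewrite Fb in Fy; discriminate|auto].
Qed.

Lemma pp_agree (X : Type) (fs : nat -> pinj X) (f : pinj X)
  (Hpp : converges (@tau_pp X) fs f) (s : list X) :
  exists N, forall k, N <= k -> forall x, In x s -> fs k x = f x.
Proof.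
  induction s as [|b s [N IH]].
  - exists 0; intros k _ x [].
  - assert (exists M, forall k, M <= k -> fs k b = f b) as [M HM].
    { destruct (f b) as [yb|] eqn:Fb.
      - destruct (Hpp (v_set b yb)) as [M HM].
        + intros O _ HS. apply HS. left; eauto.
        + exact Fb.
        + exists M; exact HM.
      - destruct (Hpp (w1_set b)) as [M HM].
        + intros O _ HS. apply HS. right; left; eauto.
        + exact Fb.
        + exists M; exact HM. }
    exists (max N M). intros k Hk x [<-|Hx].
    + apply HM; lia.
    + apply IH; auto; lia.
Qed.

Theorem lemma6p4 (X : Type) (tau : (pinj X -> Prop) -> Prop)
  (Htis : topological_inverse_semigroup tau)
  (Hhaus : hausdorff tau)
  (Hopen : forall A : X -> Prop, cofinite A -> rA_open tau A)
  (fs : nat -> pinj X) (f : pinj X)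
  (Hpp : converges (@tau_pp X) fs f)
  (HA : exists A : X -> Prop, cofinite A /\
          converges tau (fun k => comp (fs k) (idA A)) (comp f (idA A))) :
  converges tau fs f.
Proof.
  intros U HU Uf.
  destruct HA as [A [[s Hs] Hconv]].
  set (A' := fun x => A x \/ f x <> None).
  assert (EfA : comp f (idA A') = f).
  { apply pinj_ext; intro x; simpl; unfold comp_fun.
    destruct (classic (A' x)) as [H|H].
    - rewrite id_fun_true by exact H; reflexivity.
    - rewrite id_fun_false by exact H. unfold A' in H.
      destruct (f x); [exfalso; apply H; right; discriminate|reflexivity]. }
  pose proof Htis as [Htop [Hmul Hinv]].
  destruct (Hmul U HU (f, idA A')) as [V0 [W1 [HV0 [HW1 [V0f [W1i H01]]]]]].
  { simpl; rewrite EfA; exact Uf. }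
  simpl in *.
  destruct (nbhd_list X tau Htis Hhaus f s V0 HV0 V0f) as [U' [HU' [U'f HU'a]]].
  destruct (Hopen A (ex_intro _ s Hs) U' HU') as [V [HV HVe]].
  assert (Vf : V (comp f (idA A))).
  { apply (proj1 (HVe _)). exists f; auto. }
  destruct (Hconv V HV Vf) as [N1 HN1].
  destruct (pp_agree X fs f Hpp s) as [N2 HN2].
  exists (max N1 N2). intros k Hk.
  assert (HW : exists g, U' g /\ comp (fs k) (idA A) = comp g (idA A)).
  { apply (proj2 (HVe _)). split; [apply HN1; lia|]. exists (fs k); reflexivity. }
  destruct HW as [g [U'g Eg]].
  destruct (HU'a g U'g) as [V0g Hgs].
  replace (fs k) with (comp g (idA A')); [apply H01; auto|].
  apply pinj_ext; intro x; simpl; unfold comp_fun.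
  destruct (classic (A x)) as [Ax|nAx].
  - rewrite id_fun_true by (left; exact Ax).
    assert (E := f_equal (fun h : pinj X => h x) Eg). simpl in E; unfold comp_fun in E.
    rewrite id_fun_true in E by exact Ax. auto.
  - assert (Hin := Hs x nAx).
    rewrite (HN2 k ltac:(lia) x Hin).
    destruct (f x) as [y|] eqn:Fx.
    + rewrite id_fun_true by (right; rewrite Fx; discriminate).
      apply (Hgs x Hin y Fx).
    + rewrite id_fun_false; auto. unfold A'; rewrite Fx; tauto.
Qed.
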